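(* Let $X$ be a non-trivial separated locally convex space with topology $\sigma(X,X^* )$, $T$ an arbitrary index set, $f,g,h_t:X\to\overline{\mathbb{R}}$ ($t\in T$) proper convex functions, $A=\{x\in X:h_t(x)\le0\ \forall t\in T\}$, and $(P)$ the problem $\inf_{x\in A}\{f(x)-g(x)\}$. Let $B:=\{0\}\times\{0\}\times\,]0,+\infty[\,\times\mathbb{R}\subseteq W\times\mathbb{R}$. If $v(P)\in\mathbb{R}$, then $$\operatorname{epi}(f-g+\delta_A)^c\cap B=\{(0,0,\delta,\beta):\delta>0,\ \beta\ge -v(P)\}=\bigcap_{x\in X}\operatorname{epi}\big(c'(\cdot,x)-v(P)\big).$$ Consequently, $\operatorname{epi}(f-g+\delta_A)^c\cap B$ is an e$'$-convex set.
   Context: $X^*$ is the topological dual of $X$, $\langle x,x^*\rangle$ the pairing, $W:=X^*\times X^*\times\mathbb{R}$. The coupling $c:X\times W\to\overline{\mathbb{R}}$ is $c(x,(x^*,y^*,\alpha))=\langle x,x^*\rangle$ if $\langle x,y^*\rangle<\alpha$ and $+\infty$ otherwise; $c'((x^*,y^*,\alpha),x):=c(x,(x^*,y^*,\alpha))$. For $\varphi:X\to\overline{\mathbb{R}}$, $\varphi^c(w):=\sup_{x\in X}\{c(x,w)-\varphi(x)\}$, with the convention $(+\infty)+(-\infty)=(-\infty)+(+\infty)=(+\infty)-(+\infty)=(-\infty)-(-\infty)=-\infty$. $\delta_A$ is the indicator of $A$ ($0$ on $A$, $+\infty$ elsewhere); by convention $f(x)-g(x)=+\infty$ for $x\notin\operatorname{dom}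 f$. For $\psi:W\to\overline{\mathbb{R}}$, $\operatorname{epi}\psi=\{(w,\beta)\in W\times\mathbb{R}:\psi(w)\le\beta\}$. A function $k:W\to\overline{\mathbb{R}}$ is e$'$-convex if it is convex and is the pointwise supremum of a family of functions of the form $c'(\cdot,x)-\beta$ with $x\in X$, $\beta\in\mathbb{R}$. A set $D\subseteq W\times\mathbb{R}$ is e$'$-convex if $D=\operatorname{epi}k$ for some e$'$-convex function $k$. $v(P)$ is the optimal value of $(P)$. *)

(* Defs.v *)
From HB Require Import structures.
From mathcomp Require Import all_boot all_algebra all_classical all_reals all_analysis.
Import GRing.Theory Num.Theory.
Set Implicit Arguments. Unset Strict Implicit. Unset Printing Implicit Defensive.
Local Open Scope classical_set_scope.
Local Open Scope ring_scope.

Section Defs.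
Variables (R : realType) (X : tvsType R).

Record dual := Dual {
  dfun :> X -> R ;
  dfunD : forall x y : X, dfun (x + y) = dfun x + dfun y ;
  dfunZ : forall (a : R) (x : X), dfun (a *: x) = a * dfun x ;
  dfun_cont : continuous (dfun : X -> R^o) }.

Lemma dual0_D (x y : X) : (fun _ : X => 0 : R) (x + y) = (fun _ : X => 0 : R) x + (fun _ : X => 0 : R) y.
Proof. by rewrite addr0. Qed.
Lemma dual0_Z (a : R) (x : X) : (fun _ : X => 0 : R) (a *: x) = a * (fun _ : X => 0 : R) x.
Proof. by rewrite mulr0. Qed.
Lemma dual0_cont : continuous ((fun _ : X => 0 : R) : X -> R^o).
Proof. exact: cst_continuous. Qed.

Definition dual0 : dual := Dual dual0_D dual0_Z dual0_cont.

Definition W := (dual * dual * R)%type.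

Local Open Scope ereal_scope.

Definition cpl (x : X) (w : W) : \bar R :=
  if (w.1.2 x < w.2)%R then (w.1.1 x)%:E else +oo.
Definition cpl' (w : W) (x : X) : \bar R := cpl x w.

(* c-conjugate; MathComp's extended-real subtraction satisfies exactly the
   conventions (+oo)+(-oo) = (-oo)+(+oo) = (+oo)-(+oo) = (-oo)-(-oo) = -oo *)
Definition cconj (phi : X -> \bar R) (w : W) : \bar R :=
  ereal_sup [set cpl x w - phi x | x in [set: X]].

Definition epi (psi : W -> \bar R) : set (W * R) :=
  [set p | psi p.1 <= p.2%:E].

Definition indic (A : set X) (x : X) : \bar R := if `[< A x >] then 0 else +oo.

Definition fsub (f g : X -> \bar R) (x : X) : \bar R :=
  if f x < +oo then f x - g x else +oo.

(* f - g + delta_A : equal to f - g on A and +oo outside A *)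
Definition fgA (f g : X -> \bar R) (A : set X) (x : X) : \bar R :=
  if `[< A x >] then fsub f g x else +oo.

Definition convex_fun (f : X -> \bar R) : Prop :=
  forall (x y : X) (a b l : R), (0 <= l <= 1)%R ->
    f x <= a%:E -> f y <= b%:E ->
    f (l *: x + (1 - l) *: y)%R <= (l * a + (1 - l) * b)%R%:E.

Definition proper_fun (f : X -> \bar R) : Prop :=
  (forall x, f x != -oo) /\ exists x, f x < +oo.

(* convexity of a function on W = X^* x X^* x R (convex epigraph); w3 is the
   convex combination l w1 + (1-l) w2, the dual components being compared
   pointwise *)
Definition convexW (k : W -> \bar R) : Prop :=
  forall (w1 w2 w3 : W) (a b l : R), (0 <= l <= 1)%R ->
    (forall x, w3.1.1 x = l * w1.1.1 x + (1 - l) * w2.1.1 x)%R ->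
    (forall x, w3.1.2 x = l * w1.1.2 x + (1 - l) * w2.1.2 x)%R ->
    (w3.2 = l * w1.2 + (1 - l) * w2.2)%R ->
    k w1 <= a%:E -> k w2 <= b%:E -> k w3 <= (l * a + (1 - l) * b)%R%:E.

Definition econvex_fun (k : W -> \bar R) : Prop :=
  convexW k /\
  exists S : set (X * R),
    forall w, k w = ereal_sup [set cpl' w p.1 - p.2%:E | p in S].

Definition econvex_set (D : set (W * R)) : Prop :=
  exists k, econvex_fun k /\ D = epi k.

Definition Bset : set (W * R) :=
  [set p | p.1.1.1 = dual0 /\ p.1.1.2 = dual0 /\ (0 < p.1.2)%R].

End Defs.

(* Main.v *)
Require Import Defs.
From HB Require Import structures.
From mathcomp Require Import all_boot all_order all_algebra all_classical all_reals all_analysis.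
From mathcomp Require Import lra.
Import Order.TTheory GRing.Theory Num.Theory.
Local Open Scope classical_set_scope.
Local Open Scope ring_scope.

Section Aux.
Variables (R : realType) (X : tvsType R).

Lemma dual_bounded (phi : dual X) (c : R) : (forall x, phi x <= c) -> forall x, phi x = 0.
Proof.
move=> H x; apply/eqP; apply/negPn/negP => nz.
have := H (((`|c| + 1) / phi x) *: x).
rewrite dfunZ mulrVK ?unitfE //.
have : c <= `|c| by apply: ler_norm.
move=> h1 h2; have : `|c| + 1 <= `|c| by apply: le_trans h2 h1.
lra.
Qed.

Lemma dual_eq0 (phi : dual X) : (forall x, phi x = 0) -> phi = dual0 X.
Proof.
case: phi => d dD dZ dc /= H.
have E : d = (fun _ => 0) by apply: funext.
subst d; rewrite /dual0; congr Dual; exact: Prop_irrelevance.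
Qed.

Lemma key (w : W X) (v b : R) :
  (forall x, (cpl x w - v%:E <= b%:E)%E) <->
  [/\ (forall x, w.1.1 x = 0), (forall x, w.1.2 x = 0), 0 < w.2 & - v <= b].
Proof.
split.
- move=> H.
  have H1 : forall x, w.1.2 x < w.2 /\ w.1.1 x - v <= b.
    move=> x; have := H x; rewrite /cpl; case: ifP => h.
    by move=> hh; split => //; rewrite -lee_fin EFinB.
    by rewrite addye // leye_eq.
  have Z1 : forall x, w.1.1 x = 0.
    apply: (@dual_bounded _ (b + v)) => x.
    by have [_ h] := H1 x; rewrite -lerBlDr.
  have Z2 : forall x, w.1.2 x = 0.
    apply: (@dual_bounded _ w.2) => x.
    by have [h _] := H1 x; apply: ltW.
  split => //.
  + by have [h _] := H1 0; rewrite Z2 in h.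
  + by have [_ h] := H1 0; rewrite Z1 sub0r in h.
- case=> Z1 Z2 d0 vb x; rewrite /cpl Z2 d0 Z1 -EFinB lee_fin sub0r //.
Qed.

End Aux.

Theorem lemma4p7 (R : realType) (X : tvsType R) (T : Type)
  (f g : X -> \bar R) (h : T -> X -> \bar R) :
  hausdorff_space X ->
  (exists x : X, x != 0) ->
  convex_fun f -> proper_fun f ->
  convex_fun g -> proper_fun g ->
  (forall t, convex_fun (h t)) -> (forall t, proper_fun (h t)) ->
  let A := [set x : X | forall t, (h t x <= 0)%E] in
  let vP := ereal_inf [set fsub f g x | x in A] in
  forall v : R, vP = v%:E ->
  let D := epi (cconj (fgA f g A)) `&` @Bset R X in
  D = [set p | exists (d b : R), p = ((@dual0 R X, @dual0 R X, d), b) /\ 0 < d /\ - v <= b]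
  /\ [set p | exists (d b : R), p = ((@dual0 R X, @dual0 R X, d), b) /\ 0 < d /\ - v <= b]
     = \bigcap_(x in [set: X]) epi (fun w => (cpl' w x - v%:E)%E)
  /\ econvex_set D.
Proof.
move=> _ _ _ _ _ _ _ _ A vP v hv D.
set E := [set p | exists (d b : R), p = ((@dual0 R X, @dual0 R X, d), b) /\ 0 < d /\ - v <= b].
have HE : E = \bigcap_(x in [set: X]) epi (fun w => (cpl' w x - v%:E)%E).
  apply/seteqP; split => p.
  - case=> d [b [-> [d0 vb]]] x _.
    rewrite /epi /cpl' /=.
    have := (proj2 (@key R X (@dual0 R X, @dual0 R X, d) v b)) (And4 (fun _ => erefl) (fun _ => erefl) d0 vb) x.
    by [].
  - move=> H.
    have : forall x, (cpl x p.1 - v%:E <= p.2%:E)%E by move=> x; exact: (H x I).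
    move/(@key R X) => [Z1 Z2 d0 vb].
    exists p.1.2, p.2; split; last by [].
    case: p {H} Z1 Z2 d0 vb => [[[a c] d] b] /= Z1 Z2 _ _.
    by rewrite (@dual_eq0 R X _ Z1) (@dual_eq0 R X _ Z2).
have C : forall d b : R, 0 < d ->
    (cconj (fgA f g A) (@dual0 R X, @dual0 R X, d) <= b%:E)%E <-> - v <= b.
  move=> d b d0.
  have cp : forall x, cpl x (@dual0 R X, @dual0 R X, d) = 0%E.
    by move=> x; rewrite /cpl /= d0.
  rewrite /cconj; split.
  - move=> H.
    have Hx : forall x, ((- b)%:E <= fgA f g A x)%E.
      move=> x.
      have : (cpl x (@dual0 R X, @dual0 R X, d) - fgA f g A x <=
        ereal_sup [set (cpl x0 (@dual0 R X, @dual0 R X, d) - fgA f g A x0)%E | x0 in [set: X]])%E.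
        by apply: ereal_sup_ubound; exists x.
      move=> /le_trans /(_ H); rewrite cp sub0e.
      by rewrite leeNl EFinN.
    rewrite lerNl -lee_fin -hv; apply: le_ereal_inf_tmp => y [x Ax <-].
    by have := Hx x; rewrite /fgA asboolT.
  - move=> vb; apply: ge_ereal_sup => y [x _ <-].
    rewrite cp sub0e leeNl -EFinN /fgA.
    case: asboolP => Ax; last by rewrite leey.
    have : (vP <= fsub f g x)%E by apply: ereal_inf_lbound; exists x.
    rewrite hv; apply: le_trans; by rewrite lee_fin lerNl.
have HD : D = E.
  apply/seteqP; split => p.
  - case=> Hepi [B1 [B2 B3]].
    exists p.1.2, p.2; split.
      case: p Hepi B1 B2 B3 => [[[a c] d] b] /= _ E1 E2 _; by rewrite E1 E2.
    split => //; apply/(C _ _ B3).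
    by move: Hepi; rewrite /epi /=; case: p B1 B2 B3 => [[[a c] d] b] /= E1 E2 _; rewrite E1 E2.
  - case=> d [b [-> [d0 vb]]]; split; last by [].
    by apply/(C _ _ d0).
split; first exact: HD.
split; first exact: HE.
set k := fun w : W X => ereal_sup [set (cpl' w q.1 - q.2%:E)%E | q in [set q : X * R | q.2 = v]].
have Kle : forall w b, (k w <= b%:E)%E <-> (forall x, (cpl x w - v%:E <= b%:E)%E).
  move=> w b; split.
  - move=> H x; apply: le_trans H.
    by apply: ereal_sup_ubound; exists (x, v).
  - move=> H; apply: ge_ereal_sup => y [[x r] /= -> <-]; exact: H.
exists k; split; [split|].
- move=> w1 w2 w3 a b l /andP[l0 l1] e1 e2 e3.
  move=> /Kle/(@key R X) [Z11 Z12 d1 va] /Kle/(@key R X) [Z21 Z22 d2 vb].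
  apply/Kle/(@key R X); split.
  + by move=> x; rewrite e1 Z11 Z21 !mulr0 addr0.
  + by move=> x; rewrite e2 Z12 Z22 !mulr0 addr0.
  + rewrite e3; nra.
  + nra.
- by exists [set q : X * R | q.2 = v].
- rewrite HD HE; apply/seteqP; split => p.
  + move=> H; rewrite /epi /=; apply/Kle => x; exact: (H x I).
  + move=> /Kle H x _; exact: H x.
Qed.
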